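(* Let $\alpha_1,\alpha_2 \ge 0$, $\beta_1,\beta_2 \in [0,1]$, and let $U_1, U_2, V_1, V_2$ be random variables with $U_1, U_2$ independent and $V_1, V_2$ independent. If $V_i \preceq_{(\alpha_i, \beta_i)} U_i$ for $i \in \{1,2\}$, then $V_1 + V_2 \preceq_{(\alpha_1+\alpha_2,\, \beta_1+\beta_2)} U_1 + U_2$.
   Context: For a random variable $X$ (possibly taking values $\pm\infty$) let $\bar{F}_X(x) = 1 - F_X(x)$ be its complementary CDF. Given $\alpha \ge 0$, $\beta \in [0,1]$, we write $V \preceq_{(\alpha,\beta)} U$ ($U$ $(\alpha,\beta)$-approximately stochastically dominates $V$) if $\bar{F}_V(x) \le \bar{F}_U(x-\alpha) + \beta$ for all $x \in [-\infty,\infty]$. *)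

(* Defs.v *)
From HB Require Import structures.
From mathcomp Require Import all_boot all_order all_algebra.
From mathcomp Require Import all_classical all_reals all_analysis measurable_realfun.
Set Implicit Arguments. Unset Strict Implicit. Unset Printing Implicit Defensive.
Import Order.TTheory GRing.Theory Num.Theory.
Local Open Scope classical_set_scope.
Local Open Scope ring_scope.
Local Open Scope ereal_scope.

Definition ccdf d (T : measurableType d) (R : realType) (P : probability T R)
  (X : T -> \bar R) (x : \bar R) : \bar R :=
  1 - P [set w | X w <= x].

Definition approx_sdom d (T : measurableType d) (R : realType) (P : probability T R)
  (alpha beta : R) (V U : T -> \bar R) : Prop :=
  forall x : \bar R, ccdf P V x <= ccdf P U (x - alpha%:E) + beta%:E.

Definition indep2 d (T : measurableType d) (R : realType) (P : probability T R)
  (X Y : T -> \bar R) : Prop :=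
  forall A B : set (\bar R), measurable A -> measurable B ->
    P (X @^-1` A `&` Y @^-1` B) = P (X @^-1` A) * P (Y @^-1` B).

(* Main.v *)
Require Import Defs.
From HB Require Import structures.
From mathcomp Require Import all_boot all_order all_algebra.
From mathcomp Require Import all_classical all_reals all_analysis measurable_realfun.
Set Implicit Arguments. Unset Strict Implicit. Unset Printing Implicit Defensive.
Import Order.TTheory GRing.Theory Num.Theory.
Local Open Scope classical_set_scope.
Local Open Scope ring_scope.

Definition law d d' (T : measurableType d) (T' : measurableType d') (R : realType)
  (P : probability T R) (V : T -> T') (mV : measurable_fun setT V) : probability T' R :=
  distribution P (mfun_Sub (mem_set mV : V \in mfun)).

Lemma lawE d d' (T : measurableType d) (T' : measurableType d') (R : realType)
  (P : probability T R) (V : T -> T') (mV : measurable_fun setT V) A :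
  law P mV A = P (V @^-1` A).
Proof. by []. Qed.

Lemma ccdfE d (T : measurableType d) (R : realType) (P : probability T R)
  (V : T -> \bar R) (x : \bar R) : measurable_fun setT V ->
  Defs.ccdf P V x = P [set w | x < V w]%E.
Proof.
move=> mV; rewrite /Defs.ccdf.
have mS : measurable [set w | V w <= x]%E.
  by rewrite -[X in measurable X]setTI; exact: emeasurable_fun_infty_c.
rewrite -probability_setC//; congr (P _); apply/seteqP; split=> w /=.
  by move=> h; rewrite ltNge; apply/negP.
by rewrite ltNge => /negP.
Qed.

Lemma indep_prod d (T : measurableType d) (R : realType) (P : probability T R)
  (X Y : T -> \bar R) (mX : measurable_fun setT X) (mY : measurable_fun setT Y) :
  indep2 P X Y -> forall S, measurable S ->
  P ((fun w => (X w, Y w)) @^-1` S) = ((law P mX) \x (law P mY))%E S.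
Proof.
move=> hind S mS.
have mXY := measurable_fun_pair mX mY.
rewrite -(lawE P mXY S).
apply/esym/product_measure_unique => // A B mA mB.
Qed.

Lemma ltpinfty_aux (R : realType) (y v : \bar R) : y != +oo%E ->
  (y < v + +oo)%E = (-oo < v)%E.
Proof. by case: y => [r| |] // _; case: v => [s| |] /=; rewrite ?ltry ?ltNyr ?ltxx ?ltNye ?ltey. Qed.

Lemma pw d (T : measurableType d) (R : realType) (P : probability T R)
  (alpha beta : R) (V U : T -> \bar R) : (0 <= beta)%R ->
  measurable_fun setT V -> measurable_fun setT U ->
  approx_sdom P alpha beta V U -> forall c y : \bar R,
  (P [set w | y < V w + c] <= P [set w | y - alpha%:E < U w + c] + beta%:E)%E.
Proof.
move=> b0 mV mU h c y.
have rhs0 : forall S, (0 <= P S + beta%:E)%E.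
  by move=> S; rewrite adde_ge0// lee_fin.
case: c => [r| |].
- have -> : [set w | y < V w + r%:E]%E = [set w | y - r%:E < V w]%E.
    by apply: eq_set => w; rewrite lteBlDr.
  have -> : [set w | y - alpha%:E < U w + r%:E]%E = [set w | y - r%:E - alpha%:E < U w]%E.
    by apply: eq_set => w; rewrite addeAC [in RHS]lteBlDr.
  by have := h (y - r%:E)%E; rewrite !ccdfE.
- have [->|yoo] := eqVneq y +oo%E.
    have -> : [set w | +oo < V w + +oo]%E = set0.
      by apply/seteqP; split=> w //=; rewrite ltNge leey.
    by rewrite measure0.
  have -> : [set w | y < V w + +oo]%E = [set w | -oo < V w]%E.
    by apply: eq_set => w; rewrite ltpinfty_aux.
  have yaoo : (y - alpha%:E != +oo)%E by case: y yoo.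
  have -> : [set w | y - alpha%:E < U w + +oo]%E = [set w | -oo < U w]%E.
    by apply: eq_set => w; rewrite ltpinfty_aux.
  by have := h -oo%E; rewrite !ccdfE.
- have -> : [set w | y < V w + -oo]%E = set0.
    apply/seteqP; split=> w //=; case: (V w) => [?| |] //=; by rewrite ltNge leNye.
  by rewrite measure0.
Qed.

Definition Eset (R : realType) (y : \bar R) : set (\bar R * \bar R) :=
  [set z | y < z.1 + z.2]%E.

Lemma measurable_Eset (R : realType) (y : \bar R) : measurable (Eset y).
Proof.
rewrite -[Eset y]setTI.
exact: (emeasurable_fun_o_infty measurableT (emeasurable_funD measurable_fst measurable_snd)).
Qed.

Lemma swap_prod d1 d2 (T1 : measurableType d1) (T2 : measurableType d2) (R : realType)
  (m1 : probability T1 R) (m2 : probability T2 R) S : measurable S ->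
  (m1 \x m2)%E S = (m1 \x^ m2)%E S.
Proof.
apply: product_measure_unique => A B mA mB.
exact: product_measure2E.
Qed.

Lemma stepx d (T : measurableType d) (R : realType) (P : probability T R)
  (m1 : probability (\bar R) R)
  (alpha beta : R) (V U : T -> \bar R) (mV : measurable_fun setT V)
  (mU : measurable_fun setT U) : (0 <= beta)%R ->
  approx_sdom P alpha beta V U -> forall y,
  ((m1 \x law P mV) (Eset y) <= (m1 \x law P mU) (Eset (y - alpha%:E)) + beta%:E)%E.
Proof.
move=> b0 h y.
have sec : forall (W : T -> \bar R) (mW : measurable_fun setT W) y a,
    law P mW (xsection (Eset y) a) = P [set w | y < W w + a]%E.
  move=> W mW y' a; rewrite lawE; congr (P _); apply: eq_set => w.
  by rewrite /preimage /xsection /Eset /= in_setE /= addeC.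
rewrite /product_measure1 /=.
have hc : (\int[m1]_a (cst beta%:E) a = beta%:E)%E.
  rewrite integral_cst//; apply: (eq_trans _ (mule1 _)); congr (_ * _)%E; exact: probability_setT.
rewrite -[X in (_ <= _ + X)%E]hc.
rewrite -ge0_integralD//; last exact: measurable_fun_xsection (measurable_Eset _).
apply: ge0_le_integral => //.
all: try (by move=> a _; exact: measure_ge0).
all: try (exact: measurable_fun_xsection (measurable_Eset _)).
all: try (apply: emeasurable_funD; [exact: measurable_fun_xsection (measurable_Eset _)| exact: measurable_cst]).
move=> a _ /=; rewrite !sec.
exact: pw.
Qed.

Lemma stepy d (T : measurableType d) (R : realType) (P : probability T R)
  (m2 : probability (\bar R) R)
  (alpha beta : R) (V U : T -> \bar R) (mV : measurable_fun setT V)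
  (mU : measurable_fun setT U) : (0 <= beta)%R ->
  approx_sdom P alpha beta V U -> forall y,
  ((law P mV \x^ m2) (Eset y) <= (law P mU \x^ m2) (Eset (y - alpha%:E)) + beta%:E)%E.
Proof.
move=> b0 h y.
have sec : forall (W : T -> \bar R) (mW : measurable_fun setT W) y a,
    law P mW (ysection (Eset y) a) = P [set w | y < W w + a]%E.
  move=> W mW y' a; rewrite lawE; congr (P _); apply: eq_set => w.
  by rewrite /preimage /ysection /Eset /= in_setE.
rewrite /product_measure2 /=.
have hc : (\int[m2]_a (cst beta%:E) a = beta%:E)%E.
  rewrite integral_cst//; apply: (eq_trans _ (mule1 _)); congr (_ * _)%E; exact: probability_setT.
rewrite -[X in (_ <= _ + X)%E]hc.
rewrite -ge0_integralD//; last exact: measurable_fun_ysection (measurable_Eset _).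
apply: ge0_le_integral => //.
all: try (by move=> a _; exact: measure_ge0).
all: try (exact: measurable_fun_ysection (measurable_Eset _)).
all: try (apply: emeasurable_funD; [exact: measurable_fun_ysection (measurable_Eset _)| exact: measurable_cst]).
move=> a _ /=; rewrite !sec.
exact: pw.
Qed.

Theorem mainTheorem3 (d : measure_display) (T : measurableType d) (R : realType)
  (P : probability T R) (alpha1 alpha2 beta1 beta2 : R)
  (U1 U2 V1 V2 : T -> \bar R) :
  0 <= alpha1 -> 0 <= alpha2 ->
  0 <= beta1 <= 1 -> 0 <= beta2 <= 1 ->
  measurable_fun setT U1 -> measurable_fun setT U2 ->
  measurable_fun setT V1 -> measurable_fun setT V2 ->
  indep2 P U1 U2 -> indep2 P V1 V2 ->
  approx_sdom P alpha1 beta1 V1 U1 -> approx_sdom P alpha2 beta2 V2 U2 ->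
  approx_sdom P (alpha1 + alpha2) (beta1 + beta2)
    (fun w => (V1 w + V2 w)%E) (fun w => (U1 w + U2 w)%E).
Proof.
move=> _ _ /andP[b10 _] /andP[b20 _] mU1 mU2 mV1 mV2 iU iV h1 h2 x.
have mV12 : measurable_fun setT (fun w => V1 w + V2 w)%E := emeasurable_funD mV1 mV2.
have mU12 : measurable_fun setT (fun w => U1 w + U2 w)%E := emeasurable_funD mU1 mU2.
rewrite !ccdfE//.
have -> : P [set w | x < V1 w + V2 w]%E = (law P mV1 \x law P mV2)%E (Eset x).
  exact: (indep_prod mV1 mV2 iV (measurable_Eset x)).
have ex : (x - (alpha1 + alpha2)%:E = x - alpha2%:E - alpha1%:E)%E.
  by rewrite EFinD oppeD// addeA addeAC.
have -> : P [set w | x - (alpha1 + alpha2)%:E < U1 w + U2 w]%E =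
    (law P mU1 \x law P mU2)%E (Eset (x - alpha2%:E - alpha1%:E)%E).
  rewrite ex; exact: (indep_prod mU1 mU2 iU (measurable_Eset _)).
apply: (le_trans (stepx (law P mV1) mV2 mU2 b20 h2 x)).
rewrite swap_prod; last exact: measurable_Eset.
rewrite EFinD (addeA _ beta1%:E).
apply: leeD2r.
rewrite swap_prod; last exact: measurable_Eset.
exact: (stepy (law P mU2) mV1 mU1 b10 h1).
Qed.
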